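(* Consider the drop-and-shuffle Markov chain $\mathcal{M}$ described in the context (with $\bot$ absorbing), with parameters $r\ge1$ and $p_d\in(1-\frac{1}{\sqrt r},1]$. Then the mean hitting time $m_\varepsilon(\bot)$ (the expected number of states visited from $\varepsilon$ before reaching $\bot$) is finite and $$m_\varepsilon(\bot)=\frac{1+2(1-p_d)}{1-r(1-p_d)^2}.$$ Moreover, $m_s(\mathrm{Pop}(s))=m_\varepsilon(\bot)$ for every recursive sub-tree root $s$.
   Context: Fix an integer $r\ge1$ and a drop probability $p_d\in[0,1]$. Let $S_{\mathrm{Sel}}=\{[\,],\ [H|T],\ [\,][H|T],\ [H|T][\,]\}$ (four formal symbols) and let $S_{\mathrm{Com}}$ be the set of nonempty tuples $(y_1,\ldots,y_l)$, $1\le l\le r$, of pairwise distinct elements of $\{1,\ldots,r\}$. Pairs in $S_{\mathrm{Sel}}\times S_{\mathrm{Com}}$ are written $\langle x,y\rangle$. Let $W=(S_{\mathrm{Sel}}\times S_{\mathrm{Com}})^*$ be the set of finite words of such pairs, including the empty word $\varepsilon$. The state space is $W\cup\{w\cdot x: w\in W,\ x\in S_{\mathrm{Sel}}\}\cup\{\bot\}$, the initial state is $\varepsilon$. Define $\mathrm{Pop}$ recursively by $\mathrm{Pop}(\varepsilon)=\bot$, $\mathrm{Pop}(w\cdot[\,][H|T])=w\cdot[H|T]$, $\mathrm{Pop}(w\cdot[H|T][\,])=w\cdot[\,]$, $\mathrm{Pop}(w\cdot[\,])=\mathrm{Pop}(w)$, $\mathrm{Pop}(w\cdot[H|T])=\mathrm{Pop}(w)$,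 $\mathrm{Pop}(w\cdot\langle x,(y_1)\rangle)=\mathrm{Pop}(w\cdot x)$, and $\mathrm{Pop}(w\cdot\langle x,(y_1,y_2,\ldots,y_l)\rangle)=w\cdot\langle x,(y_2,\ldots,y_l)\rangle$ for $l\ge2$. Transition probabilities, for $w\in W$ (unlisted ones are $0$): from $w$, go to $w\cdot[H|T][\,]$ and to $w\cdot[\,][H|T]$ each with probability $(1-p_d)^2/2$, to $w\cdot[\,]$ and to $w\cdot[H|T]$ each with probability $p_d(1-p_d)$, and to $\mathrm{Pop}(w)$ with probability $p_d^2$; from $w\cdot x$ with $x\in\{[H|T],[H|T][\,]\}$, go to $w\cdot\langle x,(y_1,\ldots,y_l)\rangle$ with probability $p_d^{r-l}(1-p_d)^l/l!$ for each $(y_1,\ldots,y_l)\in S_{\mathrm{Com}}$, and to $\mathrm{Pop}(w\cdot x)$ with probability $p_d^r$; from $w\cdot x$ with $x\in\{[\,],[\,][H|T]\}$, go to $\mathrm{Pop}(w\cdot x)$ with probability $1$; and $p(\bot,\bot)=1$. (This models SLD resolution of a test-generating Prolog program in which, at each resolution step, each matching clause is independently dropped with probability $p_d$ and the remaining ones are uniformly shuffled.) A recursive sub-tree root is a state in $W\setminus\{\varepsilon\}$, i.e. of the form $w\cdot\langle x,y\rangle$. For states $a$ and $b$, $m_a(b)\in[0,\infty]$ is the expected value of $\inf\{n\ge0: X_n=b\}$ for the chain started at $X_0=a$. *)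

(* Defs.v *)
From HB Require Import structures.
From mathcomp Require Import all_boot all_order all_algebra.
From mathcomp Require Import classical_sets reals constructive_ereal ereal.
From Stdlib Require List.
Set Implicit Arguments.
Unset Strict Implicit.
Unset Printing Implicit Defensive.
Import Order.TTheory GRing.Theory Num.Theory.
Local Open Scope ring_scope.

(* S_Sel: the four formal symbols
   SNil = [ ],  SCons = [H|T],  SNilCons = [ ][H|T],  SConsNil = [H|T][ ] *)
Inductive sel := SNil | SCons | SNilCons | SConsNil.

Definition letter := (sel * seq nat)%type.

(* IMPORTANT CONVENTION: words are stored REVERSED, i.e. the head
   of the list is the LAST letter of the word.
   W w      = the word (rev w) in W
   WX w x   = the state (rev w) . x
   Bot      = the absorbing state. *)
Inductive state := W of seq letter | WX of seq letter & sel | Bot.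

Lemma sel_eq_dec (x y : sel) : {x = y} + {x <> y}.
Proof. decide equality. Defined.

Lemma state_eq_dec (s t : state) : {s = t} + {s <> t}.
Proof.
have ld : forall a b : seq letter, {a = b} + {a <> b}.
  apply: List.list_eq_dec; move=> [x1 y1] [x2 y2].
  case: (sel_eq_dec x1 x2) => [->|h]; last by right; case.
  case: (List.list_eq_dec PeanoNat.Nat.eq_dec y1 y2) => [->|h]; first by left.
  by right; case.
decide equality; exact: sel_eq_dec.
Defined.

HB.instance Definition _ := hasDecEq.Build state (compareP state_eq_dec).

Fixpoint pop_W (w : seq letter) : state :=
  match w with
  | [::] => Bot
  | (x, y) :: w' =>
      match y with
      | _ :: ((_ :: _) as y') => W ((x, y') :: w')
      | _ =>                                          (* l = 1 : Pop(w'.x) *)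
          match x with
          | SNilCons => WX w' SCons
          | SConsNil => WX w' SNil
          | _ => pop_W w'
          end
      end
  end.

Definition pop_WX (w : seq letter) (x : sel) : state :=
  match x with
  | SNilCons => WX w SCons
  | SConsNil => WX w SNil
  | _ => pop_W w
  end.

Definition Pop (s : state) : state :=
  match s with W w => pop_W w | WX w x => pop_WX w x | Bot => Bot end.

Fixpoint seqs_len (r l : nat) : seq (seq nat) :=
  match l with
  | 0 => [:: [::]]
  | l'.+1 => flatten [seq [seq i :: s | s <- seqs_len r l'] | i <- iota 1 r]
  end.

Definition com_list (r : nat) : seq (seq nat) :=
  flatten [seq [seq s <- seqs_len r l | uniq s] | l <- iota 1 r].

Definition is_com (r : nat) (y : seq nat) : bool :=
  [&& (0 < size y)%N, uniq y & all (fun i => (1 <= i <= r)%N) y].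

Definition valid_word (r : nat) (w : seq letter) : bool :=
  all (fun xy => is_com r xy.2) w.

Section Chain.
Variables (R : realType) (r : nat) (pd : R).

(* Transition law: list of (probability, next state); unlisted ones are 0. *)
Definition step (s : state) : seq (R * state) :=
  match s with
  | W w => [:: ((1 - pd) ^+ 2 / 2, WX w SConsNil);
              ((1 - pd) ^+ 2 / 2, WX w SNilCons);
              (pd * (1 - pd), WX w SNil);
              (pd * (1 - pd), WX w SCons);
              (pd ^+ 2, pop_W w)]
  | WX w x =>
      match x with
      | SCons | SConsNil =>
          [seq (pd ^+ (r - size y) * (1 - pd) ^+ (size y) / (size y)`!%:R,
                W ((x, y) :: w)) | y <- com_list r]
          ++ [:: (pd ^+ r, pop_WX w x)]
      | _ => [:: (1, pop_WX w x)]
      end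
  | Bot => [:: (1, Bot)]
  end.

(* Law of the trajectory (X_0, ..., X_N) started at a, as a list of
   (probability, trajectory) pairs. *)
Fixpoint traj (N : nat) (a : state) : seq (R * seq state) :=
  match N with
  | 0 => [:: (1, [:: a])]
  | N'.+1 =>
      flatten [seq [seq (pc.1 * qp.1, a :: qp.2) | qp <- traj N' pc.2]
              | pc <- step a]
  end.

(* E_a[ min(T_b, N) ] where T_b = inf{n >= 0 : X_n = b}; on a trajectory
   X_0..X_N, find gives the first index of b (N+1 if absent). *)
Definition trunc_hit_mean (N : nat) (a b : state) : R :=
  \sum_(qp <- traj N a) qp.1 * (minn (find (pred1 b) qp.2) N)%:R.

(* m_a(b) = E_a[T_b] in [0, +oo], via monotone convergence
   E[T] = sup_N E[min(T, N)]. *)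
Definition mean_hit (a b : state) : \bar R :=
  ereal_sup (range (fun N => (trunc_hit_mean N a b)%:E)).

End Chain.

(* Main.v *)
Require Import Defs.
From mathcomp Require Import all_boot all_order all_algebra.
From mathcomp Require Import classical_sets reals constructive_ereal ereal.
From mathcomp Require Import boolp.
From mathcomp Require Import ring lra zify.
Import Order.TTheory GRing.Theory Num.Theory.

Fixpoint seqsA (A : seq nat) (l : nat) : seq (seq nat) :=
  match l with
  | 0 => [:: [::]]
  | l'.+1 => flatten [seq [seq i :: s | s <- seqsA A l'] | i <- A]
  end.

Lemma seqs_lenE r l : seqs_len r l = seqsA (iota 1 r) l.
Proof. by elim: l => //= l ->. Qed.

Lemma mem_seqsA A l s : (s \in seqsA A l) = (size s == l) && all (mem A) s.
Proof.
elim: l s => [|l IH] s /=; first by case: s.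
apply/flatten_mapP/idP.
  move=> [i iA /mapP[t tA ->]] /=; move: tA; rewrite IH => /andP[/eqP <- ->].
  by rewrite eqxx iA.
case: s => //= i t /andP[st /andP[iA tA]]; exists i => //.
by apply/mapP; exists t => //; rewrite IH -eqSS st.
Qed.

Lemma uniq_flat_cons (B : seq nat) (S : seq (seq nat)) :
  uniq B -> uniq S -> uniq (flatten [seq [seq i :: s | s <- S] | i <- B]).
Proof.
move=> uB uS; elim: B uB => //= a B IHA /andP[aA uB].
rewrite cat_uniq map_inj_uniq ?uS //; last by move=> x y [].
rewrite IHA // andbT; apply/hasPn => t /flatten_mapP[j jA /mapP[u _ ->]].
apply/mapP => -[v _ [ej _]]; by move: aA; rewrite -ej jA.
Qed.

Lemma uniq_seqsA A l : uniq A -> uniq (seqsA A l).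
Proof. by move=> uA; elim: l => //= l IH; apply: uniq_flat_cons. Qed.

Lemma size_seqsA A l s : s \in seqsA A l -> size s = l.
Proof. by rewrite mem_seqsA => /andP[/eqP]. Qed.

Lemma sumn_const_map (T : Type) (A : seq T) c : sumn [seq c | _ <- A] = size A * c.
Proof. by elim: A => //= a A ->; rewrite mulSn. Qed.

Lemma count_uniq_seqsA l A : uniq A -> count uniq (seqsA A l) = (size A) ^_ l.
Proof.
elim: l A => [|l IH] A uA /=; first by rewrite ffactn0.
rewrite count_flatten -map_comp.
rewrite (_ : map _ A = [seq (size A).-1 ^_ l | _ <- A]).
  rewrite sumn_const_map; case: (size A) => [|n] //=; by rewrite ffactSS.
apply/eq_in_map => i iA /=; rewrite count_map.
have -> : count (preim (cons i) uniq) (seqsA A l) = count uniq (seqsA (rem i A) l).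
  rewrite -!size_filter; apply/perm_size/uniq_perm.
  - by rewrite filter_uniq // uniq_seqsA.
  - by rewrite filter_uniq // uniq_seqsA // rem_uniq.
  move=> s; rewrite !mem_filter !mem_seqsA /=.
  have -> : all (mem (rem i A)) s = (i \notin s) && all (mem A) s.
    elim: s => //= x s ->; rewrite (mem_rem_uniq _ uA) inE /= in_cons negb_or.
    by rewrite eq_sym; case: (i != x); case: (x \in A); case: (i \in s).
  by case: (i \in s); case: (uniq s); case: (size s == l).
by rewrite IH ?rem_uniq // size_rem.
Qed.

Local Open Scope ring_scope.
Set Implicit Arguments. Unset Strict Implicit.


Section Comb.
Variable R : realType.

Lemma sum_iota1 (f : nat -> R) n :
  \sum_(l <- iota 1 n) f l = \sum_(i < n) f i.+1.
Proof.
rewrite (iotaDl 1 0 n) big_map -val_enum_ord big_map.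
by rewrite big_enum /=.
Qed.

Lemma sum_com_size r (g : nat -> R) :
  \sum_(y <- com_list r) g (size y) = \sum_(l <- iota 1 r) (r ^_ l)%:R * g l.
Proof.
rewrite /com_list big_flatten big_map; apply: eq_bigr => l _.
rewrite seqs_lenE.
rewrite (eq_big_seq (fun _ => g l)); last first.
  by move=> y; rewrite mem_filter mem_seqsA => /andP[_ /andP[/eqP -> _]].
rewrite big_const_seq count_predT size_filter.
rewrite count_uniq_seqsA ?iota_uniq // size_iota.
by rewrite iter_addr_0 mulr_natl.
Qed.

Lemma ffact_div r l : (r ^_ l)%:R / (l`!)%:R = ('C(r, l))%:R :> R.
Proof.
by rewrite -bin_ffact natrM mulfK // pnatr_eq0 -lt0n fact_gt0.
Qed.

Lemma bin_sum0 (a b : R) n :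
  \sum_(l <- iota 1 n) ('C(n, l))%:R * (a ^+ (n - l) * b ^+ l) = (a + b) ^+ n - a ^+ n.
Proof.
rewrite exprDn big_ord_recl /= subn0 expr0 mulr1 bin0 mulr1n.
rewrite addrC addKr sum_iota1; apply: eq_bigr => i _.
by rewrite mulr_natl.
Qed.

Lemma bin_sum1 (a b : R) n :
  \sum_(l <- iota 1 n) ('C(n, l))%:R * (a ^+ (n - l) * b ^+ l) * l%:R
    = n%:R * b * (a + b) ^+ n.-1.
Proof.
case: n => [|m]; first by rewrite big_nil mul0r mul0r.
rewrite sum_iota1 /= exprDn mulr_sumr; apply: eq_bigr => i _.
have := mul_bin_diag m.+1 i; rewrite /= => e.
rewrite subSS exprS.
have -> : 'C(m.+1, i.+1)%:R * (a ^+ (m - i) * (b * b ^+ i)) * (i.+1)%:R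
  = (i.+1 * 'C(m.+1, i.+1))%:R * b * (a ^+ (m - i) * b ^+ i) :> R.
  by rewrite natrM; ring.
by rewrite -e natrM mulrnAr -mulr_natl; ring.
Qed.

End Comb.

Lemma com_sum (R : realType) r (pd : R) (g : nat -> R) :
  \sum_(y <- com_list r)
     (pd ^+ (r - size y) * (1 - pd) ^+ (size y) / (size y)`!%:R) * g (size y)
  = \sum_(l <- iota 1 r) ('C(r, l))%:R * (pd ^+ (r - l) * (1 - pd) ^+ l) * g l.
Proof.
rewrite (@sum_com_size R r (fun l => (pd ^+ (r - l) * (1 - pd) ^+ l / l`!%:R) * g l)).
apply: eq_bigr => l _; rewrite -(@ffact_div R); ring.
Qed.

Section ComId.
Variables (R : realType) (r : nat) (pd : R).
Definition pw (l : nat) : R := pd ^+ (r - l) * (1 - pd) ^+ l / l`!%:R.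

Lemma com_gen (z : R) :
  \sum_(y <- com_list r) pw (size y) * z ^+ size y = (pd + (1 - pd) * z) ^+ r - pd ^+ r.
Proof.
rewrite (@com_sum R r pd (fun l => z ^+ l)) -bin_sum0; apply: eq_bigr => l _.
rewrite exprMn; ring.
Qed.

Lemma com_mass : \sum_(y <- com_list r) pw (size y) = 1 - pd ^+ r.
Proof.
have := com_gen 1; rewrite mulr1 (_ : pd + (1 - pd) = 1); last by ring.
rewrite expr1n => <-; apply: eq_bigr => y _; by rewrite expr1n mulr1.
Qed.

Lemma com_mean : \sum_(y <- com_list r) pw (size y) * (size y)%:R = r%:R * (1 - pd).
Proof.
rewrite (@com_sum R r pd (fun l => l%:R)) bin_sum1 (_ : pd + (1 - pd) = 1); last by ring.
by rewrite expr1n mulr1.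
Qed.
End ComId.

Section Chain.
Variables (R : realType) (r : nat) (pd : R).

Lemma step_mass a : \sum_(pc <- step r pd a) pc.1 = 1.
Proof.
case: a => [w|w x|] /=.
- by rewrite !big_cons big_nil /=; field.
- case: x => /=; rewrite ?big_cons ?big_nil //= ?addr0 //.
  + rewrite big_cat big_map big_cons big_nil /= addr0.
    by have := @com_mass R r pd; rewrite /pw => ->; rewrite subrK.
  + rewrite big_cat big_map big_cons big_nil /= addr0.
    by have := @com_mass R r pd; rewrite /pw => ->; rewrite subrK.
- by rewrite big_cons big_nil addr0.
Qed.

End Chain.


Section Rec.
Variables (R : realType) (r : nat) (pd : R).

Lemma traj_mass N a : \sum_(qp <- traj r pd N a) qp.1 = 1.
Proof.
elim: N a => [|N IH] a /=; first by rewrite big_cons big_nil addr0.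
rewrite big_flatten big_map -(step_mass r pd a); apply: eq_bigr => pc _.
by rewrite big_map /= -mulr_sumr IH mulr1.
Qed.

Lemma thm0 a b : trunc_hit_mean r pd 0 a b = 0.
Proof. by rewrite /trunc_hit_mean /= big_cons big_nil minn0 mulr0 addr0. Qed.

Lemma thm_rec N a b : trunc_hit_mean r pd N.+1 a b =
  if a == b then 0 else
  \sum_(pc <- step r pd a) pc.1 * (1 + trunc_hit_mean r pd N pc.2 b).
Proof.
rewrite /trunc_hit_mean /= big_flatten big_map.
case: eqP => [->|nab].
  rewrite big1 // => pc _; rewrite big_map big1 // => qp _.
  by rewrite /= eqxx /= min0n mulr0.
apply: eq_bigr => pc _; rewrite big_map /=.
have -> : (a == b) = false by apply/eqP.
apply: (@eq_trans _ _ (pc.1 * (\sum_(qp <- traj r pd N pc.2) qp.1 + \sum_(qp <- traj r pd N pc.2) qp.1 * (minn (find (pred1 b) qp.2) N)%:R))); last by rewrite traj_mass.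
rewrite -big_split mulr_sumr /=.
apply: eq_bigr => qp _; rewrite minnSS -addn1 natrD; ring.
Qed.
End Rec.


Definition liftS (sw : seq letter) (t : state) : state :=
  match t with W v => W (v ++ sw) | WX v x => WX (v ++ sw) x | Bot => pop_W sw end.

Lemma pop_W_cat sw v : pop_W (v ++ sw) = liftS sw (pop_W v).
Proof.
elim: v => [|[x y] v IH] //=.
by case: y => [|a [|b c]] //=; case: x.
Qed.

Lemma pop_WX_cat sw v x : pop_WX (v ++ sw) x = liftS sw (pop_WX v x).
Proof. by case: x => //=; rewrite pop_W_cat. Qed.

Lemma pop_ne w : forall v x, pop_W w <> W (v ++ w) /\ pop_W w <> WX (v ++ w) x.
Proof.
elim: w => [|[x y] w IH] v x' //=.
case: y => [|a [|b c]] /=.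
- case: x => //=; try (split; [discriminate | case => /(congr1 size); rewrite size_cat /=; lia]).
  + have [h1 h2] := IH (rcons v (SNil, [::])) x'.
    by rewrite -cats1 -catA /= in h1 h2.
  + have [h1 h2] := IH (rcons v (SCons, [::])) x'.
    by rewrite -cats1 -catA /= in h1 h2.
- case: x => //=; try (split; [discriminate | case => /(congr1 size); rewrite size_cat /=; lia]).
  + have [h1 h2] := IH (rcons v (SNil, [:: a])) x'.
    by rewrite -cats1 -catA /= in h1 h2.
  + have [h1 h2] := IH (rcons v (SCons, [:: a])) x'.
    by rewrite -cats1 -catA /= in h1 h2.
- split; last discriminate.
  case => e.
  have e2 : size ((x, b :: c) :: w) = size (v ++ (x, [:: a, b & c]) :: w) by rewrite e.
  rewrite size_cat /= in e2.
  have v0 : v = [::] by case: v e e2 => //= ? l _ /eqP; rewrite addnS eqSS -{1}[size w]add0n eqn_add2r.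
  subst v; move: e => /= [] _ e3; move: (f_equal (@size nat) e3) => /=.
  exact: n_Sn.
Qed.

Section Lift.
Variables (R : realType) (r : nat) (pd : R) (sw : seq letter).

Lemma step_lift a : a <> Bot ->
  step r pd (liftS sw a) = [seq (pc.1, liftS sw pc.2) | pc <- step r pd a].
Proof.
case: a => [v|v x|] // _ /=; first by rewrite pop_W_cat.
case: x => /=; rewrite ?pop_W_cat // map_cat -map_comp //.
Qed.

Lemma thm_lift N a :
  trunc_hit_mean r pd N (liftS sw a) (pop_W sw) = trunc_hit_mean r pd N a Bot.
Proof.
elim: N a => [|N IH] a; first by rewrite !thm0.
rewrite !thm_rec.
case: (a =P Bot) => [->|nb]; first by rewrite !eqxx.
have -> : (liftS sw a == pop_W sw) = false.
  apply/eqP; case: a nb => [v|v x|] //= _.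
  - by move=> e; have [] := pop_ne sw v SNil; rewrite e.
  - by move=> e; have [] := pop_ne sw v x; rewrite e.
rewrite step_lift // big_map; apply: eq_bigr => pc _ /=; by rewrite IH.
Qed.
End Lift.


Lemma mem_com r y : y \in com_list r -> (0 < size y)%N.
Proof.
move=> /flatten_mapP[l]; rewrite mem_iota => /andP[l1 _].
rewrite mem_filter seqs_lenE mem_seqsA => /andP[_ /andP[/eqP -> _]].
by [].
Qed.

Section Lin.
Variables (R : realType) (r : nat) (pd : R).

Lemma com_lin (A B : R) :
  \sum_(y <- com_list r) pw r pd (size y) * ((size y)%:R * A + B)
  = r%:R * (1 - pd) * A + (1 - pd ^+ r) * B.
Proof.
rewrite (eq_bigr (fun y => pw r pd (size y) * (size y)%:R * A + pw r pd (size y) * B)); last first.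
  by move=> y _; ring.
by rewrite big_split /= -!mulr_suml com_mean com_mass.
Qed.

Lemma com_geo (z M : R) :
  \sum_(y <- com_list r) pw r pd (size y) * (z ^+ size y * M)
  = ((pd + (1 - pd) * z) ^+ r - pd ^+ r) * M.
Proof.
rewrite (eq_bigr (fun y => pw r pd (size y) * z ^+ size y * M)); last first.
  by move=> y _; ring.
by rewrite -mulr_suml com_gen.
Qed.
End Lin.

Section V.
Variables (R : realType) (r : nat) (pd : R).
Let q := 1 - pd.
Variable h : R.
Hypothesis hE : h = 1 + q * (2 + r%:R * q * h).

Definition tailV (x : sel) : R :=
  match x with SConsNil => 1 | SNilCons => 1 + r%:R * q * h | _ => 0 end.
Definition cv (l : letter) : R := ((size l.2).-1)%:R * h + tailV l.1.
Definition CV (w : seq letter) : R := \sum_(l <- w) cv l.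
Definition TV (x : sel) : R :=
  match x with SCons => 1 + r%:R * q * h | SNil => 1 | _ => 2 + r%:R * q * h end.
Definition V (s : state) : R :=
  match s with W w => h + CV w | WX w x => TV x + CV w | Bot => 0 end.

Lemma CV_cons l w : CV (l :: w) = cv l + CV w.
Proof. by rewrite /CV big_cons. Qed.

Lemma V_pop w : V (pop_W w) = CV w.
Proof.
elim: w => [|[x y] w IH]; first by rewrite /CV big_nil.
rewrite CV_cons /=.
case: y => [|a [|b c]] /=.
- case: x => //=; rewrite /cv /= ?mul0r ?add0r ?IH //; by rewrite addrC.
- case: x => //=; rewrite /cv /= ?mul0r ?add0r ?IH //; by rewrite addrC.
- rewrite CV_cons /cv /= -addn1 natrD; ring.
Qed.

Lemma V_harm a : a <> Bot -> V a = 1 + \sum_(pc <- step r pd a) pc.1 * V pc.2.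
Proof.
case: a => [w|w x|] // _ /=.
- rewrite !big_cons big_nil /= V_pop.
  by rewrite {1}hE /q; field.
- case: x => /=; rewrite ?big_cons ?big_nil /= ?V_pop.
  + by rewrite mul1r addr0.
  + rewrite big_cat big_map big_cons big_nil /= V_pop.
    rewrite (eq_big_seq (fun y => pw r pd (size y) * ((size y)%:R * h + CV w))); last first.
      move=> y /mem_com; rewrite CV_cons /cv /=.
      case: (size y) => // n _; rewrite /pw /= [(n.+1)%:R]mulrS; ring.
    rewrite (@com_lin R r pd) /q; ring.
  + by rewrite mul1r addr0 /TV; ring.
  + rewrite big_cat big_map big_cons big_nil /=.
    rewrite (eq_big_seq (fun y => pw r pd (size y) * ((size y)%:R * h + (1 + CV w)))); last first.
      move=> y /mem_com; rewrite CV_cons /cv /=.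
      case: (size y) => // n _; rewrite /pw /= [(n.+1)%:R]mulrS; ring.
    rewrite (@com_lin R r pd) /q; ring.
Qed.

Lemma V_ge0 : 0 <= h -> 0 <= pd -> pd <= 1 -> forall s, 0 <= V s.
Proof.
move=> h0 p0 p1.
have q0 : 0 <= q by rewrite /q subr_ge0.
have rqh : 0 <= r%:R * q * h by rewrite !mulr_ge0.
have cv0 : forall l, 0 <= cv l.
  move=> [x y]; rewrite /cv /=; apply: addr_ge0; first by rewrite mulr_ge0.
  by case: x => /=; lra.
have CV0 : forall w, 0 <= CV w by move=> w; rewrite /CV; apply: sumr_ge0.
case => [w|w x|] /=; first by apply: addr_ge0.
  apply: addr_ge0 => //; case: x => /=; lra.
by [].
Qed.
End V.


Section Bounds.
Variables (R : realType) (r : nat) (pd : R).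
Hypotheses (pd0 : 0 <= pd) (pd1 : pd <= 1).

Lemma step_ge0 a pc : pc \in step r pd a -> 0 <= pc.1.
Proof.
have q0 : 0 <= 1 - pd by rewrite subr_ge0.
case: a => [w|w x|] /=.
- rewrite !inE => /orP[/eqP ->|/orP[/eqP ->|/orP[/eqP ->|/orP[/eqP ->|/eqP ->]]]] /=; rewrite ?mulr_ge0 ?exprn_ge0 ?invr_ge0 //.
- case: x => /=; rewrite ?inE.
  + by move=> /eqP ->.
  + rewrite mem_cat inE => /orP[/mapP[y _ ->]|/eqP ->] /=; last exact: exprn_ge0.
    by rewrite !mulr_ge0 ?exprn_ge0 ?invr_ge0.
  + by move=> /eqP ->.
  + rewrite mem_cat inE => /orP[/mapP[y _ ->]|/eqP ->] /=; last exact: exprn_ge0.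
    by rewrite !mulr_ge0 ?exprn_ge0 ?invr_ge0.
- by rewrite inE => /eqP ->.
Qed.

Lemma upper_bound (U : state -> R) :
  (forall s, 0 <= U s) ->
  (forall a, a <> Bot -> 1 + \sum_(pc <- step r pd a) pc.1 * U pc.2 <= U a) ->
  forall N a, trunc_hit_mean r pd N a Bot <= U a.
Proof.
move=> U0 Uh; elim=> [|N IH] a; first by rewrite thm0.
rewrite thm_rec; case: eqP => [_|nb]; first exact: U0.
apply: le_trans (Uh _ nb).
rewrite -[X in _ <= X + _](step_mass r pd a) -big_split /= big_seq [X in _ <= X]big_seq.
apply: ler_sum => pc /step_ge0 p0; rewrite -[X in _ <= X + _]mulr1 -mulrDr.
by apply: ler_wpM2l => //; rewrite lerD2l.
Qed.

Lemma lower_bound (U F : state -> R) (lam K : R) :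
  U Bot = 0 ->
  (forall a, a <> Bot -> U a = 1 + \sum_(pc <- step r pd a) pc.1 * U pc.2) ->
  (forall a, a <> Bot -> lam * \sum_(pc <- step r pd a) pc.1 * F pc.2 <= F a) ->
  (forall s, 0 <= F s) -> 0 <= K -> 0 < lam -> (forall s, U s <= K * F s) ->
  forall N a, lam ^+ N * (U a - trunc_hit_mean r pd N a Bot) <= K * F a.
Proof.
move=> UB Uh Fh F0 K0 l0 UF; elim=> [|N IH] a.
  by rewrite thm0 expr0 mul1r subr0.
rewrite thm_rec; case: eqP => [->|nb].
  by rewrite UB subr0 mulr0 mulr_ge0.
have -> : U a - \sum_(pc <- step r pd a) pc.1 * (1 + trunc_hit_mean r pd N pc.2 Bot)
   = \sum_(pc <- step r pd a) pc.1 * (U pc.2 - trunc_hit_mean r pd N pc.2 Bot).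
  rewrite (Uh _ nb) -{1}(step_mass r pd a) -big_split /= -sumrB.
  by apply: eq_bigr => pc _; ring.
apply: le_trans (ler_wpM2l K0 (Fh _ nb)).
rewrite exprS -mulrA [K * _]mulrA [K * lam]mulrC -mulrA; apply: ler_wpM2l; first exact: ltW.
rewrite mulr_sumr mulr_sumr big_seq [X in _ <= X]big_seq.
apply: ler_sum => pc /step_ge0 p0.
rewrite mulrCA [K * _]mulrCA; apply: ler_wpM2l => //; exact: IH.
Qed.
End Bounds.


Section F.
Variables (R : realType) (r : nat) (pd G lam : R).
Let q := 1 - pd.
Definition Zc : R := (pd + q * G) ^+ r.
Definition Bx (x : sel) : R :=
  match x with SNil => lam | SCons => lam * Zc | _ => lam ^+ 2 * Zc end.
Definition tau (x : sel) : R :=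
  match x with SNilCons => lam * Zc | SConsNil => lam | _ => 1 end.
Definition cf (l : letter) : R := G ^+ (size l.2).-1 * tau l.1.
Definition PF (w : seq letter) : R := \prod_(l <- w) cf l.
Definition F (s : state) : R :=
  match s with W w => G * PF w | WX w x => Bx x * PF w | Bot => 1 end.

Lemma PF_cons l w : PF (l :: w) = cf l * PF w.
Proof. by rewrite /PF big_cons. Qed.

Lemma F_pop w : F (pop_W w) = PF w.
Proof.
elim: w => [|[x y] w IH]; first by rewrite /PF big_nil.
rewrite PF_cons /=.
case: y => [|a [|b c]] /=.
- by case: x => //=; rewrite /cf /= ?expr0 ?mul1r ?IH.
- by case: x => //=; rewrite /cf /= ?expr0 ?mul1r ?IH.
- rewrite PF_cons /cf /= exprS; ring.
Qed.

Hypotheses (G0 : 0 <= G) (l0 : 0 <= lam) (pd0 : 0 <= pd) (pd1 : pd <= 1).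
Hypothesis Wcond :
  lam * ((1 - pd) ^+ 2 / 2 * (lam ^+ 2 * Zc + lam ^+ 2 * Zc)
         + pd * (1 - pd) * (lam + lam * Zc) + pd ^+ 2) <= G.

Lemma Zc_ge0 : 0 <= Zc.
Proof. by apply: exprn_ge0; apply: addr_ge0 => //; apply: mulr_ge0 => //; rewrite /q subr_ge0. Qed.

Lemma PF_ge0 w : 0 <= PF w.
Proof.
rewrite /PF; apply: prodr_ge0 => -[x y] _; rewrite /cf; apply: mulr_ge0.
  exact: exprn_ge0.
have := Zc_ge0; case: x => /= Z0 //; by apply: mulr_ge0.
Qed.

Lemma F_harm a : a <> Bot -> lam * \sum_(pc <- step r pd a) pc.1 * F pc.2 <= F a.
Proof.
have P0 := PF_ge0.
case: a => [w|w x|] // _ /=.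
- rewrite !big_cons big_nil /= F_pop.
  apply: le_trans (ler_wpM2r (P0 w) Wcond); rewrite /Bx /=.
  by rewrite le_eqVlt; apply/orP; left; apply/eqP; ring.
- case: x => /=; rewrite ?big_cons ?big_nil /= ?F_pop.
  + by rewrite mul1r addr0.
  + rewrite big_cat big_map big_cons big_nil /= F_pop.
    rewrite (eq_big_seq (fun y => pw r pd (size y) * (G ^+ size y * PF w))); last first.
      move=> y /mem_com; rewrite PF_cons /cf /=.
      case: (size y) => // n _; rewrite /pw /= [G ^+ n.+1]exprS; ring.
    rewrite (@com_geo R r pd) le_eqVlt; apply/orP; left; apply/eqP.
    rewrite /Zc /q; ring.
  + by rewrite mul1r addr0 /Bx; rewrite le_eqVlt; apply/orP; left; apply/eqP; ring.
  + rewrite big_cat big_map big_cons big_nil /=.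
    rewrite (eq_big_seq (fun y => pw r pd (size y) * (G ^+ size y * (lam * PF w)))); last first.
      move=> y /mem_com; rewrite PF_cons /cf /=.
      case: (size y) => // n _; rewrite /pw /= [G ^+ n.+1]exprS; ring.
    rewrite (@com_geo R r pd) le_eqVlt; apply/orP; left; apply/eqP.
    rewrite /Zc /q; ring.
Qed.
End F.


Lemma bern (R : realType) (G : R) k : 1 <= G -> 1 + k%:R * (G - 1) <= G ^+ k.
Proof.
move=> G1; elim: k => [|k IH]; first by rewrite mul0r addr0 expr0.
rewrite exprS -addn1 natrD.
have : 0 <= k%:R * (G - 1) * (G - 1) by rewrite !mulr_ge0 // ?subr_ge0.
have : G * (1 + k%:R * (G - 1)) <= G * G ^+ k by apply: ler_wpM2l => //; lra.
lra.
Qed.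

Section Cmp.
Variables (R : realType) (r : nat) (pd h G lam : R).
Hypotheses (h0 : 0 <= h) (pd0 : 0 <= pd) (pd1 : pd <= 1) (G1 : 1 < G) (l1 : 1 < lam).

Lemma Zc_ge1 : 1 <= Zc r pd G.
Proof.
rewrite /Zc; apply: exprn_ege1.
have : 0 <= (1 - pd) * (G - 1) by rewrite mulr_ge0 // subr_ge0 // ltW.
lra.
Qed.

Lemma rqh0 : 0 <= r%:R * (1 - pd) * h.
Proof. by rewrite !mulr_ge0 // subr_ge0. Qed.

Definition K1 : R := h / (G - 1) + (1 + r%:R * (1 - pd) * h) / (lam - 1).

Lemma tau_ge1 x : 1 <= tau r pd G lam x.
Proof.
have Z1 := Zc_ge1.
case: x => //=; last by apply: ltW.
have : 1 * 1 <= lam * Zc r pd G by apply: ler_pM => //; apply: ltW.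
by rewrite mul1r.
Qed.

Lemma cf_ge1 l : 1 <= cf r pd G lam l.
Proof.
rewrite /cf -[1]mul1r; apply: ler_pM => //; last exact: tau_ge1.
by apply: exprn_ege1; apply: ltW.
Qed.

Lemma cv_le l : cv r pd h l <= K1 * (cf r pd G lam l - 1).
Proof.
case: l => x y; rewrite /cv /cf /=.
set k := (size y).-1.
have Gk := bern k (ltW G1).
have t1 := tau_ge1 x.
have Gk1 : 1 <= G ^+ k by apply: exprn_ege1; apply: ltW.
have Gm : 0 < G - 1 by rewrite subr_gt0.
have lm : 0 < lam - 1 by rewrite subr_gt0.
have R0 := rqh0.
have R1 : 0 <= 1 + r%:R * (1 - pd) * h by lra.
have A0 : 0 <= h / (G - 1) by rewrite divr_ge0 // ltW.
have B0 : 0 <= (1 + r%:R * (1 - pd) * h) / (lam - 1) by rewrite divr_ge0 // ltW.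
have e1 : k%:R * h = h / (G - 1) * (k%:R * (G - 1)).
  by field; rewrite gt_eqF.
have e2 : tailV r pd h x <= (1 + r%:R * (1 - pd) * h) / (lam - 1) * (tau r pd G lam x - 1).
  have Z1 := Zc_ge1.
  case: x t1 => /= t1; rewrite ?subrr ?mulr0 //.
  - have lam0 : 0 <= lam by lra.
    have lz : lam * 1 <= lam * Zc r pd G by apply: ler_wpM2l.
    have lz2 : lam - 1 <= lam * Zc r pd G - 1 by lra.
    have := ler_wpM2l B0 lz2.
    rewrite mulrAC -mulrA divff ?mulr1; last by rewrite gt_eqF.
    by rewrite mulrC.
  - rewrite mulrAC -mulrA divff ?mulr1; last by rewrite gt_eqF.
    lra.
have k0 : 0 <= k%:R * (G - 1) by rewrite mulr_ge0 // ltW.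
have H : (G ^+ k - 1) + (tau r pd G lam x - 1) <= G ^+ k * tau r pd G lam x - 1.
  have t0 : 0 <= tau r pd G lam x - 1 by lra.
  have g0 : 0 <= G ^+ k - 1 by lra.
  have := mulr_ge0 g0 t0.
  lra.
have H1 : k%:R * (G - 1) + (tau r pd G lam x - 1) <= G ^+ k * tau r pd G lam x - 1 by lra.
have K0 : 0 <= K1 by rewrite /K1 addr_ge0.
apply: le_trans (ler_wpM2l K0 H1).
rewrite e1 /K1 mulrDl !mulrDr.
have t0 : 0 <= tau r pd G lam x - 1 by lra.
have := mulr_ge0 A0 t0.
have := mulr_ge0 B0 k0.
lra.
Qed.
Lemma K1_ge0 : 0 <= K1.
Proof.
have R0 := rqh0.
have R1 : 0 <= 1 + r%:R * (1 - pd) * h by lra.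
have Gm : 0 <= G - 1 by rewrite subr_ge0 ltW.
have lm : 0 <= lam - 1 by rewrite subr_ge0 ltW.
by rewrite /K1 addr_ge0 // divr_ge0.
Qed.

Lemma CV_PF w : 1 <= PF r pd G lam w /\ CV r pd h w <= K1 * (PF r pd G lam w - 1).
Proof.
elim: w => [|l w [IH1 IH2]].
  by rewrite /PF /CV !big_nil subrr mulr0.
rewrite PF_cons CV_cons.
have c1 := cf_ge1 l.
have c2 := cv_le l.
have K0 := K1_ge0.
have P1 : 1 <= cf r pd G lam l * PF r pd G lam w.
  by rewrite -[1]mul1r; apply: ler_pM.
split => //.
have a0 : 0 <= cf r pd G lam l - 1 by lra.
have b0 : 0 <= PF r pd G lam w - 1 by lra.
have := mulr_ge0 K0 (mulr_ge0 a0 b0).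
have E : K1 * (cf r pd G lam l * PF r pd G lam w - 1) =
   K1 * (cf r pd G lam l - 1) + K1 * (PF r pd G lam w - 1) + K1 * ((cf r pd G lam l - 1) * (PF r pd G lam w - 1)) by ring.
rewrite E; lra.
Qed.

Definition Kc : R := 2 + r%:R * (1 - pd) * h + h + K1.

Lemma Bx_ge1 x : 1 <= Bx r pd G lam x.
Proof.
have Z1 := Zc_ge1.
have lam1 : 1 <= lam by apply: ltW.
have lz : 1 <= lam * Zc r pd G by rewrite -[1]mul1r; apply: ler_pM.
have lz2 : 1 <= lam * (lam * Zc r pd G) by rewrite -[1]mul1r; apply: ler_pM.
case: x => /=; try assumption; by rewrite expr2 -mulrA.
Qed.

Lemma VF s : V r pd h s <= Kc * F r pd G lam s.
Proof.
have h0c := h0. have pd0c := pd0. have pd1c := pd1. have G1c := G1. have l1c := l1.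
have K0 := K1_ge0.
have R0 := rqh0.
have Kc0 : 0 <= Kc.
  have H : 0 <= 2 + r%:R * (1 - pd) * h + h + K1 by lra.
  exact: H.
case: s => [w|w x|] /=.
- have [P1 C1] := CV_PF w.
  have hP : h * 1 <= h * PF r pd G lam w by apply: ler_wpM2l.
  have e1 : h + CV r pd h w <= Kc * PF r pd G lam w.
    have : Kc * PF r pd G lam w = (2 + r%:R * (1 - pd) * h) * PF r pd G lam w
       + h * PF r pd G lam w + K1 * (PF r pd G lam w - 1) + K1 by rewrite /Kc; ring.
    have : 0 <= (2 + r%:R * (1 - pd) * h) * PF r pd G lam w by apply: mulr_ge0; lra.
    lra.
  apply: le_trans e1 _; apply: ler_wpM2l => //.
  have P0 : 0 <= PF r pd G lam w by lra.
  have G1' : 1 <= G by apply: ltW.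
  by rewrite -{1}[PF _ _ _ _ w]mul1r; apply: ler_wpM2r.
- have [P1 C1] := CV_PF w.
  have T1 : TV r pd h x <= 2 + r%:R * (1 - pd) * h by case: x => /=; lra.
  have e1 : TV r pd h x + CV r pd h w <= Kc * PF r pd G lam w.
    have : Kc * PF r pd G lam w = (2 + r%:R * (1 - pd) * h) * PF r pd G lam w
       + h * PF r pd G lam w + K1 * (PF r pd G lam w - 1) + K1 by rewrite /Kc; ring.
    have : (2 + r%:R * (1 - pd) * h) * 1 <= (2 + r%:R * (1 - pd) * h) * PF r pd G lam w.
      by apply: ler_wpM2l => //; lra.
    have : 0 <= h * PF r pd G lam w by apply: mulr_ge0; lra.
    lra.
  apply: le_trans e1 _; apply: ler_wpM2l => //.
  have P0 : 0 <= PF r pd G lam w by lra.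
  by rewrite -{1}[PF _ _ _ _ w]mul1r; apply: ler_wpM2r => //; apply: Bx_ge1.
- by rewrite mulr1.
Qed.
End Cmp.


Lemma pow_bound (R : realType) (x : R) n : 0 <= x -> (1 + x) ^+ n * (1 - n%:R * x) <= 1.
Proof.
move=> x0; elim: n => [|n IH]; first by rewrite expr0 mul0r subr0 mul1r.
have p0 : 0 <= (1 + x) ^+ n by apply: exprn_ge0; lra.
have : (1 + x) ^+ n * ((1 + x) * (1 - n.+1%:R * x)) <= (1 + x) ^+ n * (1 - n%:R * x).
  apply: ler_wpM2l => //.
  have : 0 <= (n.+1)%:R * x * x by rewrite !mulr_ge0.
  rewrite [(n.+1)%:R]mulrS; lra.
rewrite exprS; move=> H; apply: le_trans IH; apply: le_trans H.
by rewrite le_eqVlt; apply/orP; left; apply/eqP; ring.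
Qed.

Lemma core (R : realType) (q pd rr k d u Z s e : R) :
  pd = 1 - q -> 0 <= q -> q <= 1 -> 1 <= rr -> k = rr * q ^+ 2 -> k < 1 -> 0 <= k ->
  d * (2 * rr) = 1 - k -> u = 1 - rr * q * d -> 0 <= Z -> Z * u <= 1 ->
  s * 2 = d * (1 - k) -> e * 14 = s ->
  (1 + e) * ((q ^+ 2 / 2) * ((1 + e) ^+ 2 * Z + (1 + e) ^+ 2 * Z)
     + pd * q * ((1 + e) + (1 + e) * Z) + pd ^+ 2) <= 1 + d.
Proof.
move=> epd q0 q1 rr1 ek k1 k0 ed eu Z0 Zu es ee.
have d0 : 0 < d.
  have : 0 < d * (2 * rr) by rewrite ed; lra.
  by rewrite pmulr_lgt0 //; lra.
have dh : d <= 1/2.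
  have : d * (2 * rr) >= d * 2 by apply: ler_wpM2l; lra.
  lra.
have rqd : rr * q * d <= (1 - k) / 2.
  have : rr * q * d * 2 = q * (d * (2 * rr)) by ring.
  rewrite ed => H.
  have : q * (1 - k) <= 1 * (1 - k) by apply: ler_wpM2r; lra.
  lra.
have rqd0 : 0 <= rr * q * d by rewrite !mulr_ge0 //; lra.
have u0 : 0 < u by lra.
have u1 : u <= 1 by lra.
have s0 : 0 < s.
  have : 0 < d * (1 - k) by apply: mulr_gt0; lra.
  lra.
have e0 : 0 < e by lra.
have e1 : e <= 1.
  have : d * (1 - k) <= d * 1 by apply: ler_wpM2l; lra.
  lra.
have C : q * Z + pd <= 1 + d - s.
  have H1 : (q * Z + pd) * u <= q + pd * u.
    have : q * (Z * u) <= q * 1 by apply: ler_wpM2l.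
    have : (q * Z + pd) * u = q * (Z * u) + pd * u by ring.
    lra.
  have H2 : q + pd * u <= (1 + d - s) * u.
    have : (1 + d) * u - (q + pd * u) = d * (u - k).
      by rewrite epd eu ek; ring.
    have : d * (u - k) >= d * ((1 - k) / 2) by apply: ler_wpM2l; lra.
    have : s * u <= s * 1 by apply: ler_wpM2l; lra.
    lra.
  have : (q * Z + pd) * u <= (1 + d - s) * u by lra.
  by rewrite ler_pM2r.
have A0 : 0 <= pd * q * Z by rewrite !mulr_ge0 //; lra.
have B0 : 0 <= pd * q by rewrite !mulr_ge0 //; lra.
have C0 : 0 <= pd ^+ 2 by rewrite sqr_ge0.
have l3 : 0 <= (1 + e) ^+ 3 by apply: exprn_ge0; lra.
have D1 : 0 <= e * (1 + e) ^+ 2 * (pd * q * Z + pd * q) + e * (1 + e) * (2 + e) * pd ^+ 2.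
  apply: addr_ge0; apply: mulr_ge0 => //; try (apply: addr_ge0 => //);
  rewrite ?mulr_ge0 ?exprn_ge0 //; lra.
have E1 : (1 + e) ^+ 3 * (q * Z + pd) - (1 + e) * ((q ^+ 2 / 2) * ((1 + e) ^+ 2 * Z + (1 + e) ^+ 2 * Z)
     + pd * q * ((1 + e) + (1 + e) * Z) + pd ^+ 2)
   = e * (1 + e) ^+ 2 * (pd * q * Z + pd * q) + e * (1 + e) * (2 + e) * pd ^+ 2.
  by rewrite epd; field.
have E2 : (1 + e) ^+ 3 * (q * Z + pd) <= (1 + e) ^+ 3 * (1 + d - s) by apply: ler_wpM2l.
have E3 : (1 + e) ^+ 3 <= 1 + 7 * e.
  have : e * e <= e * 1 by apply: ler_wpM2l; lra.
  have : e * e * e <= e * 1 * 1.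
    apply: ler_pM; rewrite ?mulr_ge0 //; try lra.
    apply: ler_pM; lra.
  have : (1 + e) ^+ 3 = 1 + 3 * e + 3 * (e * e) + e * e * e by ring.
  lra.
have E4 : (1 + e) ^+ 3 * (1 + d - s) <= (1 + 7 * e) * (1 + d - s).
  apply: ler_wpM2r => //.
  have : s * 2 <= d * 1 by rewrite es; apply: ler_wpM2l; lra.
  lra.
have : s * 2 <= d * 1 by rewrite es; apply: ler_wpM2l; lra.
have : 7 * e * (1 + d - s) <= 7 * e * 2 by apply: ler_wpM2l; lra.
have : (1 + 7 * e) * (1 + d - s) = (1 + d - s) + 7 * e * (1 + d - s) by ring.
lra.
Qed.

Lemma params (R : realType) (r : nat) (pd : R) :
  (1 <= r)%N -> 0 <= pd -> pd <= 1 -> r%:R * (1 - pd) ^+ 2 < 1 ->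
  exists G lam : R, 1 < G /\ 1 < lam /\
   lam * ((1 - pd) ^+ 2 / 2 * (lam ^+ 2 * Zc r pd G + lam ^+ 2 * Zc r pd G)
         + pd * (1 - pd) * (lam + lam * Zc r pd G) + pd ^+ 2) <= G.
Proof.
move=> r1 pd0 pd1 hk.
have rr1 : 1 <= r%:R :> R by rewrite ler1n.
have q0 : 0 <= 1 - pd by lra.
have k0 : 0 <= r%:R * (1 - pd) ^+ 2 by rewrite mulr_ge0 // sqr_ge0.
have [d ed] : exists d : R, d = (1 - r%:R * (1 - pd) ^+ 2) / (2 * r%:R) by eexists.
have [s es] : exists s : R, s = d * (1 - r%:R * (1 - pd) ^+ 2) / 2 by eexists.
have [e ee] : exists e : R, e = s / 14 by eexists.
have d0 : 0 < d by rewrite ed divr_gt0 //; lra.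
have s0 : 0 < s by rewrite es divr_gt0 // mulr_gt0 //; lra.
have e0 : 0 < e by rewrite ee divr_gt0.
exists (1 + d), (1 + e); split; first by lra.
split; first by lra.
apply: (@core R (1 - pd) pd r%:R (r%:R * (1 - pd) ^+ 2) d (1 - r%:R * (1 - pd) * d)
          (Zc r pd (1 + d)) s e) => //.
- by ring.
- by lra.
- by rewrite ed; field; apply/eqP; lra.
- by rewrite /Zc; apply: exprn_ge0; rewrite addr_ge0 // mulr_ge0 //; lra.
- have -> : Zc r pd (1 + d) = (1 + (1 - pd) * d) ^+ r by rewrite /Zc; congr (_ ^+ _); ring.
  have := @pow_bound R ((1 - pd) * d) r (mulr_ge0 q0 (ltW d0)).
  by rewrite mulrA.
- by rewrite es; field.
- by rewrite ee; field.
Qed.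


Lemma claim2 (R : realType) r (pd : R) w x y :
  mean_hit r pd (W ((x, y) :: w)) (Pop (W ((x, y) :: w))) = mean_hit r pd (W [::]) Bot.
Proof.
rewrite /mean_hit /=.
have -> : (fun N => (trunc_hit_mean r pd N (W ((x, y) :: w)) (pop_W ((x, y) :: w)))%:E)
  = (fun N => (trunc_hit_mean r pd N (W [::]) Bot)%:E).
  apply/funext => N.
  by rewrite -(@thm_lift R r pd ((x, y) :: w) N (W [::])).
by [].
Qed.

Lemma sqrt_facts (R : realType) (r : nat) (pd : R) :
  (1 <= r)%N -> 1 - (Num.sqrt (r%:R : R))^-1 < pd -> pd <= 1 ->
  0 <= pd /\ r%:R * (1 - pd) ^+ 2 < 1.
Proof.
move=> r1 hp p1.
have r0 : 0 <= r%:R :> R by rewrite ler0n.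
have rr1 : 1 <= r%:R :> R by rewrite ler1n.
have s2 := sqr_sqrtr r0.
have s0 : 0 < Num.sqrt (r%:R : R) by rewrite sqrtr_gt0; lra.
move: s2 s0 hp; move: (Num.sqrt (r%:R : R)) => s s2 s0 hp.
have s1 : 1 <= s.
  rewrite leNgt; apply/negP => sl.
  have : s * s < 1 * 1 by apply: ltr_pM => //; apply: ltW.
  rewrite -expr2 s2; lra.
have si : s^-1 <= 1 by rewrite invf_le1 //.
have si0 : 0 < s^-1 by rewrite invr_gt0.
split; first by lra.
have qs : (1 - pd) * s < 1.
  have : (1 - pd) * s < s^-1 * s by rewrite ltr_pM2r //; lra.
  by rewrite mulVf // gt_eqF.
have qs0 : 0 <= (1 - pd) * s by rewrite mulr_ge0 //; lra.
have : (1 - pd) * s * ((1 - pd) * s) < 1 * 1 by apply: ltr_pM.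
have -> : (1 - pd) * s * ((1 - pd) * s) = s ^+ 2 * (1 - pd) ^+ 2 by ring.
by rewrite s2 mul1r.
Qed.

Lemma F_ge0' (R : realType) r (pd G lam : R) : 0 <= pd -> pd <= 1 -> 1 < G -> 1 < lam ->
  forall s, 0 <= F r pd G lam s.
Proof.
move=> p0 p1 G1 l1 [w|w x|] /=.
- have [P1 _] := @CV_PF R r pd 0 G lam (lexx 0) p1 G1 l1 w.
  by apply: mulr_ge0; [exact: (le_trans ler01 (ltW G1)) | exact: (le_trans ler01 P1)].
- have [P1 _] := @CV_PF R r pd 0 G lam (lexx 0) p1 G1 l1 w.
  have B1 := @Bx_ge1 R r pd G lam p1 G1 l1 x.
  by apply: mulr_ge0; [exact: (le_trans ler01 B1) | exact: (le_trans ler01 P1)].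
- by [].
Qed.

Lemma claim1 (R : realType) (r : nat) (pd : R) :
  (1 <= r)%N -> 0 <= pd -> pd <= 1 -> r%:R * (1 - pd) ^+ 2 < 1 ->
  mean_hit r pd (W [::]) Bot
    = ((1 + 2 * (1 - pd)) / (1 - r%:R * (1 - pd) ^+ 2))%:E.
Proof.
move=> r1 p0 p1 hk.
have [h eh] : exists h : R, h = (1 + 2 * (1 - pd)) / (1 - r%:R * (1 - pd) ^+ 2) by eexists.
rewrite -eh.
have hE : h = 1 + (1 - pd) * (2 + r%:R * (1 - pd) * h).
  rewrite eh; field; rewrite subr_eq0; apply/eqP => e; move: hk; rewrite -e; lra.
have h0 : 0 <= h by rewrite eh divr_ge0 //; lra.
have V0 := @V_ge0 R r pd h h0 p0 p1.
have Vh := @V_harm R r pd h hE.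
have up : forall N, trunc_hit_mean r pd N (W [::]) Bot <= h.
  move=> N.
  have := @upper_bound R r pd p0 p1 (V r pd h) V0 _ N (W [::]).
  rewrite /V /CV big_nil addr0; apply => a na.
  by rewrite -(Vh a na).
have [G [lam [G1 [l1 Wc]]]] := params r1 p0 p1 hk.
have Fh := @F_harm R r pd G lam (ltW (lt_trans ltr01 G1)) (ltW (lt_trans ltr01 l1)) p0 p1 Wc.
have F0 := @F_ge0' R r pd G lam p0 p1 G1 l1.
have VF := @VF R r pd h G lam h0 p0 p1 G1 l1.
have Kc0 : 0 <= Kc r pd h G lam.
  by have := VF Bot; rewrite /= mulr1.
have lam0 : 0 < lam by apply: lt_trans l1.
have low := @lower_bound R r pd p0 p1 (V r pd h) (F r pd G lam) lam (Kc r pd h G lam)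
   erefl Vh Fh F0 Kc0 lam0 VF.
rewrite /mean_hit; apply/le_anti/andP; split.
  apply: ge_ereal_sup => _ [N _ <-]; by rewrite lee_fin.
apply/lee_subgt0Pr => eps eps0.
set X := Kc r pd h G lam * G / (eps * (lam - 1)).
set N := (Num.Def.trunc X).+1.
have XN : X < N%:R by apply: truncnS_gt.
apply: le_ereal_sup_tmp; exists (trunc_hit_mean r pd N (W [::]) Bot)%:E; first by exists N.
rewrite -EFinB lee_fin.
have L := low N (W [::]).
move: L; rewrite /F /V /CV /PF !big_nil addr0 mulr1 => L.
have B := bern N (ltW l1).
have D0 : 0 <= h - trunc_hit_mean r pd N (W [::]) Bot by rewrite subr_ge0.
have lm : 0 < lam - 1 by rewrite subr_gt0.
have L2 : (1 + N%:R * (lam - 1)) * (h - trunc_hit_mean r pd N (W [::]) Bot)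
   <= Kc r pd h G lam * G.
  by apply: le_trans L; apply: ler_wpM2r.
have XE : X * (eps * (lam - 1)) = Kc r pd h G lam * G.
  by rewrite /X; field; rewrite !gt_eqF.
have E1 : Kc r pd h G lam * G < N%:R * (eps * (lam - 1)).
  by rewrite -XE ltr_pM2r // mulr_gt0.
move: L2 E1 D0; move: (trunc_hit_mean r pd N (W [::]) Bot) => t L2 E1 D0.
have n0 : 0 <= N%:R :> R by rewrite ler0n.
move: (N%:R : R) L2 E1 n0 => n L2 E1 n0.
suff : h - t <= eps by lra.
rewrite leNgt; apply/negP => ht.
have : n * (lam - 1) * eps <= n * (lam - 1) * (h - t).
  by apply: ler_wpM2l; [rewrite mulr_ge0 // ltW | exact: ltW].
nra.
Qed.

Theorem theorem3p8 (R : realType) (r : nat) (pd : R) :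
  (1 <= r)%N ->
  1 - (Num.sqrt (r%:R : R))^-1 < pd -> pd <= 1 ->
  mean_hit r pd (W [::]) Bot
    = ((1 + 2 * (1 - pd)) / (1 - r%:R * (1 - pd) ^+ 2))%:E
  /\ (forall (w : seq letter) (x : sel) (y : seq nat),
        valid_word r ((x, y) :: w) ->
        mean_hit r pd (W ((x, y) :: w)) (Pop (W ((x, y) :: w)))
          = mean_hit r pd (W [::]) Bot).
Proof.
move=> r1 hs p1.
have [p0 hk] := sqrt_facts r1 hs p1.
split; first exact: claim1.
by move=> w x y _; exact: claim2.
Qed.
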